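(* Let $n\ge3$ and let $(S^n,g_0)$ be the round unit sphere $S^n\subset\mathbb{R}^{n+1}$, with $x^0,\dots,x^n$ the restrictions of the standard coordinates of $\mathbb{R}^{n+1}$. Then for all $u\in C^\infty(S^n)$, \[ \sum_{i=0}^n x^i\bigl(L_{\sigma_2}(x^iu,u,u) - x^iL_{\sigma_2}(u,u,u)\bigr) = \frac{n-1}{3}\,u\,\sigma_1(u), \] where $\sigma_1(u) := -\frac{n-4}{8}\Delta u^2 - |\nabla u|^2 + \frac n2\bigl(\frac{n-4}{4}\bigr)^2u^2$.
   Context: All geometric quantities are taken with respect to $g_0$: $\nabla$ gradient, $\delta$ divergence, $d$ exterior derivative, $\Delta=\delta d$ the (nonpositive) Laplacian. $L_{\sigma_2}$ is the symmetric trilinear differential operator (the polarization) whose diagonal is \[ L_{\sigma_2}(u,u,u) = \tfrac12\delta\bigl(|\nabla u|^2du\bigr) - \tfrac{n-4}{16}\bigl(u\Delta|\nabla u|^2 - \delta((\Delta u^2)du)\bigr) - \tfrac{n-1}{4}\bigl(\tfrac{n-4}{4}\bigr)^2 u\Delta u^2 + \tfrac{n(n-1)}{8}\bigl(\tfrac{n-4}{4}\bigr)^3u^3, \] i.e. $L_{\sigma_2}(u_1,u_2,u_3)$ is trilinear, symmetric in its three arguments, and agrees with the displayed expression when $u_1=u_2=u_3=u$. *)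

(* Defs.v *)
From Stdlib Require Import Reals List ClassicalEpsilon.
Open Scope R_scope.

(** Points of R^{n+1}: functions nat -> R; only coordinates 0..n are used
    (points we evaluate at have x k = 0 for k > n). *)
Definition Pt := nat -> R.

Definition upd (x : Pt) (i : nat) (t : R) : Pt :=
  fun k => if Nat.eqb k i then t else x k.

(** Partial derivative d/dx^i (the derivative, when it exists; junk 0-choice otherwise). *)
Definition pd (f : Pt -> R) (i : nat) (x : Pt) : R :=
  epsilon (inhabits 0)
    (fun l => derivable_pt_lim (fun t => f (upd x i t)) (x i) l).

Definition iter_pd (l : list nat) (f : Pt -> R) : Pt -> R :=
  fold_right (fun i F => pd F i) f l.

Definition cont_n (n : nat) (F : Pt -> R) : Prop :=
  forall x eps, 0 < eps -> exists delta, 0 < delta /\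
    forall y, (forall k, (k <= n)%nat -> Rabs (y k - x k) < delta) ->
              (forall k, (n < k)%nat -> y k = x k) ->
              Rabs (F y - F x) < eps.

Definition smooth (n : nat) (U : Pt -> R) : Prop :=
  forall l, Forall (fun i => (i <= n)%nat) l ->
    cont_n n (iter_pd l U) /\
    forall i x, (i <= n)%nat ->
      exists d, derivable_pt_lim (fun t => iter_pd l U (upd x i t)) (x i) d.

Definition dot (n : nat) (a b : Pt) : R := sum_f_R0 (fun i => a i * b i) n.

(** Gradient on the round sphere S^n (tangential projection of the ambient gradient);
    the formula is used as an ambient extension, evaluated on S^n. *)
Definition grad (n : nat) (f : Pt -> R) (x : Pt) : Pt :=
  fun i => pd f i x - sum_f_R0 (fun j => x j * pd f j x) n * x i.

(** Divergence on S^n of a tangent vector field V (given through an ambient extension):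
    tr(DV) - <D_x V, x>. *)
Definition div (n : nat) (V : Pt -> Pt) (x : Pt) : R :=
  sum_f_R0 (fun i => pd (fun y => V y i) i x) n
  - sum_f_R0 (fun i => sum_f_R0 (fun j => x i * x j * pd (fun y => V y i) j x) n) n.

(** Laplacian Delta = delta d = div grad (nonpositive) *)
Definition lap (n : nat) (f : Pt -> R) : Pt -> R := div n (grad n f).

Definition gsq (n : nat) (f : Pt -> R) (x : Pt) : R := dot n (grad n f x) (grad n f x).

Definition sq (f : Pt -> R) : Pt -> R := fun y => f y ^ 2.

Definition Lcub (n : nat) (u : Pt -> R) (x : Pt) : R :=
  let N := INR n in
  / 2 * div n (fun z i => gsq n u z * grad n u z i) x
  - (N - 4) / 16 * (u x * lap n (gsq n u) x
                    - div n (fun z i => lap n (sq u) z * grad n u z i) x)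
  - (N - 1) / 4 * ((N - 4) / 4) ^ 2 * (u x * lap n (sq u) x)
  + N * (N - 1) / 8 * ((N - 4) / 4) ^ 3 * u x ^ 3.

Definition fadd (f g : Pt -> R) : Pt -> R := fun y => f y + g y.

(** L_{sigma_2}(a,b,c): the symmetric trilinear polarization of Lcub *)
Definition L3 (n : nat) (a b c : Pt -> R) (x : Pt) : R :=
  / 6 * ( Lcub n (fadd a (fadd b c)) x
        - Lcub n (fadd a b) x - Lcub n (fadd a c) x - Lcub n (fadd b c) x
        + Lcub n a x + Lcub n b x + Lcub n c x ).

Definition sigma1 (n : nat) (u : Pt -> R) (x : Pt) : R :=
  let N := INR n in
  - ((N - 4) / 8) * lap n (sq u) x - gsq n u x + N / 2 * ((N - 4) / 4) ^ 2 * u x ^ 2.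

(* Main.v *)
Require Import Defs.
From Stdlib Require Import Reals List ClassicalEpsilon FunctionalExtensionality Lra Lia.
Open Scope R_scope.

Lemma dl_plus f g x l1 l2 : derivable_pt_lim f x l1 -> derivable_pt_lim g x l2 ->
  derivable_pt_lim (fun t => f t + g t) x (l1 + l2).
Proof. intros; apply (derivable_pt_lim_plus f g); auto. Qed.
Lemma dl_mult f g x l1 l2 : derivable_pt_lim f x l1 -> derivable_pt_lim g x l2 ->
  derivable_pt_lim (fun t => f t * g t) x (l1 * g x + f x * l2).
Proof. intros; apply (derivable_pt_lim_mult f g); auto. Qed.
Lemma dl_const c x : derivable_pt_lim (fun _ => c) x 0.
Proof. apply (derivable_pt_lim_const c). Qed.
Lemma dl_id x : derivable_pt_lim (fun t => t) x 1.
Proof. apply derivable_pt_lim_id. Qed.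

Lemma pd_spec F i y l : derivable_pt_lim (fun t => F (upd y i t)) (y i) l -> pd F i y = l.
Proof.
  intro H. unfold pd.
  assert (E : exists l, derivable_pt_lim (fun t => F (upd y i t)) (y i) l) by eauto.
  pose proof (epsilon_spec (inhabits 0) _ E) as H2.
  eapply uniqueness_limite; eauto.
Qed.

Lemma pd_ext f g i y : (forall z, f z = g z) -> pd f i y = pd g i y.
Proof. intro H. assert (f = g) by (extensionality z; auto). subst; auto. Qed.

Lemma sum_cmul (a : nat -> R) c N : sum_f_R0 (fun i => c * a i) N = c * sum_f_R0 a N.
Proof. induction N; simpl; [|rewrite IHN]; ring. Qed.
Lemma sum_add (a b : nat -> R) N : sum_f_R0 (fun i => a i + b i) N = sum_f_R0 a N + sum_f_R0 b N.
Proof. induction N; simpl; [|rewrite IHN]; ring. Qed.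
Lemma sum_sub (a b : nat -> R) N : sum_f_R0 (fun i => a i - b i) N = sum_f_R0 a N - sum_f_R0 b N.
Proof. induction N; simpl; [|rewrite IHN]; ring. Qed.
Lemma sum_zero N : sum_f_R0 (fun _ => 0) N = 0.
Proof. induction N; simpl; [|rewrite IHN]; ring. Qed.
Lemma sum_swap (a : nat -> nat -> R) N M :
  sum_f_R0 (fun i => sum_f_R0 (fun j => a i j) M) N = sum_f_R0 (fun j => sum_f_R0 (fun i => a i j) N) M.
Proof. induction N; simpl. auto. rewrite IHN. rewrite <- sum_add. apply sum_eq; intros; simpl; auto. Qed.
Lemma sum_kron (a : nat -> R) i N : (i <= N)%nat ->
  sum_f_R0 (fun j => a j * (if Nat.eqb j i then 1 else 0)) N = a i.
Proof. induction N; intro H.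
  - assert (i = 0%nat) by lia. subst. simpl. ring.
  - rewrite tech5. destruct (Nat.eq_dec i (S N)).
    + subst. rewrite Nat.eqb_refl.
      rewrite (sum_eq _ (fun _ => 0)). rewrite sum_zero. ring.
      intros j Hj. replace (Nat.eqb j (S N)) with false by (symmetry; apply Nat.eqb_neq; lia). ring.
    + rewrite IHN by lia. replace (Nat.eqb (S N) i) with false by (symmetry; apply Nat.eqb_neq; lia). ring.
Qed.

Lemma sum_one N : sum_f_R0 (fun _ => 1) N = INR (S N).
Proof. induction N. simpl; ring. rewrite tech5, IHN, (S_INR (S N)). auto. Qed.

Section S.
Variable n : nat.

Definition D1 (F : Pt -> R) : Prop := forall i y, (i <= n)%nat ->
  derivable_pt_lim (fun t => F (upd y i t)) (y i) (pd F i y).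

Lemma D1_ex F : (forall i y, (i <= n)%nat -> exists l,
  derivable_pt_lim (fun t => F (upd y i t)) (y i) l) -> D1 F.
Proof. intros H i y Hi. destruct (H i y Hi) as [l Hl]. rewrite (pd_spec _ _ _ _ Hl); auto. Qed.

Lemma D1_add f g : D1 f -> D1 g -> D1 (fun y => f y + g y).
Proof. intros Hf Hg. apply D1_ex; intros. eexists. apply dl_plus; [apply Hf|apply Hg]; auto. Qed.
Lemma D1_mul f g : D1 f -> D1 g -> D1 (fun y => f y * g y).
Proof. intros Hf Hg. apply D1_ex; intros. eexists. apply dl_mult; [apply Hf|apply Hg]; auto. Qed.
Lemma D1_const c : D1 (fun _ => c).
Proof. apply D1_ex; intros. eexists. apply dl_const. Qed.

Lemma upd_same y i t : upd y i t i = t.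
Proof. unfold upd. rewrite Nat.eqb_refl. auto. Qed.

Lemma dl_coord y i j : derivable_pt_lim (fun t => upd y i t j) (y i) (if Nat.eqb j i then 1 else 0).
Proof. unfold upd. destruct (Nat.eqb j i). apply dl_id. apply dl_const. Qed.

Lemma D1_coord j : D1 (fun y => y j).
Proof. apply D1_ex; intros. eexists. apply dl_coord. Qed.

Lemma pd_add f g i y : D1 f -> D1 g -> (i <= n)%nat ->
  pd (fun y => f y + g y) i y = pd f i y + pd g i y.
Proof. intros Hf Hg Hi. apply pd_spec. apply dl_plus; [apply Hf|apply Hg]; auto. Qed.
Lemma pd_mul f g i y : D1 f -> D1 g -> (i <= n)%nat ->
  pd (fun y => f y * g y) i y = pd f i y * g y + f y * pd g i y.
Proof. intros Hf Hg Hi. apply pd_spec.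
  replace (g y) with (g (upd y i (y i))).
  replace (f y) with (f (upd y i (y i))).
  apply dl_mult; [apply Hf|apply Hg]; auto.
  all: f_equal; extensionality k; unfold upd; destruct (Nat.eqb_spec k i); subst; auto.
Qed.
Lemma pd_const c i y : pd (fun _ => c) i y = 0.
Proof. apply pd_spec. apply dl_const. Qed.
Lemma pd_coord j i y : pd (fun y => y j) i y = if Nat.eqb j i then 1 else 0.
Proof. apply pd_spec. apply dl_coord. Qed.

Lemma D1_sum (F : nat -> Pt -> R) N : (forall m, (m <= N)%nat -> D1 (F m)) -> D1 (fun y => sum_f_R0 (fun m => F m y) N).
Proof. intro H. induction N; simpl. auto. apply D1_add; auto. Qed.
Lemma pd_sum (F : nat -> Pt -> R) N i y : (forall m, (m <= N)%nat -> D1 (F m)) -> (i <= n)%nat ->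
  pd (fun y => sum_f_R0 (fun m => F m y) N) i y = sum_f_R0 (fun m => pd (F m) i y) N.
Proof. intros H Hi. induction N; simpl. auto.
  rewrite pd_add; auto. rewrite IHN; auto. apply D1_sum; auto. Qed.

Fixpoint SmK (k : nat) (F : Pt -> R) : Prop :=
  match k with O => D1 F | S k => D1 F /\ forall i, (i <= n)%nat -> SmK k (pd F i) end.
Definition Sm F := forall k, SmK k F.

Lemma SmK_D1 k F : SmK k F -> D1 F.
Proof. destruct k; simpl; tauto. Qed.
Lemma SmK_S k F : SmK (S k) F -> SmK k F.
Proof. revert F; induction k; intros F H; simpl in *. tauto.
  split. tauto. intros. apply IHk. apply H; auto. Qed.
Lemma SmK_ext k f g : (forall y, f y = g y) -> SmK k f -> SmK k g.
Proof. intros H. assert (f = g) by (extensionality z; auto). subst; auto. Qed.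
Lemma pd_fext f i : D1 f -> (i<=n)%nat -> forall g, (forall y, pd f i y = g y) -> pd f i = g.
Proof. intros. extensionality y. auto. Qed.

Lemma SmK_const k c : SmK k (fun _ => c).
Proof. revert c; induction k; intro c; simpl. apply D1_const. split. apply D1_const.
  intros. apply SmK_ext with (fun _ => 0). intros; rewrite pd_const; auto. auto. Qed.
Lemma SmK_coord k j : SmK k (fun y => y j).
Proof. destruct k; simpl. apply D1_coord. split. apply D1_coord.
  intros. apply SmK_ext with (fun _ => if Nat.eqb j i then 1 else 0).
  intros; rewrite pd_coord; auto. apply SmK_const. Qed.
Lemma SmK_add k : forall f g, SmK k f -> SmK k g -> SmK k (fun y => f y + g y).
Proof. induction k; intros f g Hf Hg; simpl in *. apply D1_add; auto.
  split. apply D1_add; tauto. intros i Hi.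
  apply SmK_ext with (fun y => pd f i y + pd g i y).
  intros; rewrite pd_add; tauto. apply IHk; [apply Hf|apply Hg]; auto. Qed.
Lemma SmK_mul k : forall f g, SmK k f -> SmK k g -> SmK k (fun y => f y * g y).
Proof. induction k; intros f g Hf Hg; simpl in *. apply D1_mul; auto.
  split. apply D1_mul; tauto. intros i Hi.
  apply SmK_ext with (fun y => pd f i y * g y + f y * pd g i y).
  intros; rewrite pd_mul; tauto. apply SmK_add; apply IHk.
  apply Hf; auto. apply (SmK_S k g); simpl; auto. apply (SmK_S k f); simpl; auto. apply Hg; auto. Qed.
Lemma SmK_sum k (F : nat -> Pt -> R) N : (forall m, (m <= N)%nat -> SmK k (F m)) -> SmK k (fun y => sum_f_R0 (fun m => F m y) N).
Proof. intro H. induction N; simpl. auto. apply SmK_add; auto. Qed.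

Lemma Sm_D1 F : Sm F -> D1 F.
Proof. intro H. apply (SmK_D1 0). apply H. Qed.
Lemma Sm_pd F i : Sm F -> (i <= n)%nat -> Sm (pd F i).
Proof. intros H Hi k. pose proof (H (S k)) as H1. simpl in H1. destruct H1 as [_ H2]. apply H2; auto. Qed.
Lemma Sm_const c : Sm (fun _ => c).
Proof. intro; apply SmK_const. Qed.
Lemma Sm_coord j : Sm (fun y => y j).
Proof. intro; apply SmK_coord. Qed.
Lemma Sm_add f g : Sm f -> Sm g -> Sm (fun y => f y + g y).
Proof. intros ? ? k; apply SmK_add; auto. Qed.
Lemma Sm_mul f g : Sm f -> Sm g -> Sm (fun y => f y * g y).
Proof. intros ? ? k; apply SmK_mul; auto. Qed.
Lemma Sm_sum (F : nat -> Pt -> R) N : (forall m, (m <= N)%nat -> Sm (F m)) -> Sm (fun y => sum_f_R0 (fun m => F m y) N).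
Proof. intros H k; apply SmK_sum; intros; apply H; auto. Qed.
Lemma Sm_ext f g : (forall y, f y = g y) -> Sm f -> Sm g.
Proof. intros H1 H2 k. eapply SmK_ext; eauto. Qed.
Lemma Sm_opp f : Sm f -> Sm (fun y => - f y).
Proof. intros. apply Sm_ext with (fun y => (-1) * f y). intros; ring. apply Sm_mul; auto using Sm_const. Qed.
Lemma Sm_sub f g : Sm f -> Sm g -> Sm (fun y => f y - g y).
Proof. intros. apply Sm_ext with (fun y => f y + - g y). intros; ring. apply Sm_add; auto using Sm_opp. Qed.
Lemma Sm_pow f : Sm f -> Sm (fun y => f y ^ 2).
Proof. intros. apply Sm_ext with (fun y => f y * f y). intros; ring. apply Sm_mul; auto. Qed.

Lemma smooth_Sm U : smooth n U -> Sm U.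
Proof.
  intros H k. revert U H. induction k; intros U H.
  - apply D1_ex. intros i y Hi. destruct (H nil (Forall_nil _)) as [_ H2]. apply H2; auto.
  - simpl. split.
    + apply D1_ex. intros i y Hi. destruct (H nil (Forall_nil _)) as [_ H2]. apply H2; auto.
    + intros i Hi. apply IHk. intros l Hl.
      replace (iter_pd l (pd U i)) with (iter_pd (l ++ i :: nil) U).
      apply H. apply Forall_app; split; auto.
      unfold iter_pd. rewrite fold_right_app. reflexivity.
Qed.

Definition SmV (V : Pt -> Pt) := forall k, (k <= n)%nat -> Sm (fun y => V y k).
Definition ip (f g : Pt -> R) : Pt -> R := fun y => dot n (grad n f y) (grad n g y).

Lemma Sm_grad f k : Sm f -> (k <= n)%nat -> Sm (fun y => grad n f y k).
Proof. intros. unfold grad. apply Sm_sub. apply Sm_pd; auto.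
  apply Sm_mul; [|apply Sm_coord]. apply Sm_sum. intros. apply Sm_mul. apply Sm_coord. apply Sm_pd; auto. Qed.
Lemma SmV_grad f : Sm f -> SmV (grad n f).
Proof. intros H k Hk. apply Sm_grad; auto. Qed.
Lemma Sm_dot a b : SmV a -> SmV b -> Sm (fun y => dot n (a y) (b y)).
Proof. intros. unfold dot. apply Sm_sum. intros. apply Sm_mul; auto. Qed.
Lemma Sm_ip f g : Sm f -> Sm g -> Sm (ip f g).
Proof. intros. unfold ip. apply Sm_dot; apply SmV_grad; auto. Qed.
Lemma Sm_div V : SmV V -> Sm (div n V).
Proof. intros H. unfold div. apply Sm_sub; apply Sm_sum; intros.
  apply Sm_pd; auto. apply Sm_sum; intros. apply Sm_mul. apply Sm_mul; apply Sm_coord. apply Sm_pd; auto. Qed.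
Lemma Sm_lap f : Sm f -> Sm (lap n f).
Proof. intros. unfold lap. apply Sm_div. apply SmV_grad; auto. Qed.
Lemma SmV_scal f V : Sm f -> SmV V -> SmV (fun z i => f z * V z i).
Proof. intros H1 H2 k Hk. apply Sm_mul; auto. Qed.
Lemma SmV_add V W : SmV V -> SmV W -> SmV (fun z i => V z i + W z i).
Proof. intros H1 H2 k Hk. apply Sm_add; auto. Qed.

Lemma grad_ext f g y : (forall z, f z = g z) -> grad n f y = grad n g y.
Proof. intro H. assert (f = g) by (extensionality z; auto). subst; auto. Qed.
Lemma lap_ext f g y : (forall z, f z = g z) -> lap n f y = lap n g y.
Proof. intro H. assert (f = g) by (extensionality z; auto). subst; auto. Qed.
Lemma ip_ext f g f' g' y : (forall z, f z = f' z) -> (forall z, g z = g' z) -> ip f g y = ip f' g' y.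
Proof. intros H H'. assert (f = f') by (extensionality z; auto). assert (g = g') by (extensionality z; auto). subst; auto. Qed.
Lemma dot_ext a b a' b' : (forall k, (k <= n)%nat -> a k = a' k) -> (forall k, (k <= n)%nat -> b k = b' k) ->
  dot n a b = dot n a' b'.
Proof. intros. unfold dot. apply sum_eq. intros. rewrite H, H0; auto. Qed.
Lemma div_ext V W y : (forall z k, (k <= n)%nat -> V z k = W z k) -> div n V y = div n W y.
Proof. intros H. unfold div. f_equal; apply sum_eq; intros.
  apply pd_ext; auto. apply sum_eq; intros. f_equal. apply pd_ext; auto. Qed.

Lemma grad_add f g y k : Sm f -> Sm g -> (k <= n)%nat ->
  grad n (fun y => f y + g y) y k = grad n f y k + grad n g y k.
Proof. intros Hf Hg Hk. unfold grad. rewrite pd_add; auto using Sm_D1.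
  rewrite (sum_eq _ (fun j => y j * pd f j y + y j * pd g j y)). rewrite sum_add. ring.
  intros. rewrite pd_add; auto using Sm_D1. ring. Qed.
Lemma grad_mul f g y k : Sm f -> Sm g -> (k <= n)%nat ->
  grad n (fun y => f y * g y) y k = f y * grad n g y k + g y * grad n f y k.
Proof. intros Hf Hg Hk. unfold grad. rewrite pd_mul; auto using Sm_D1.
  rewrite (sum_eq _ (fun j => g y * (y j * pd f j y) + f y * (y j * pd g j y))). rewrite sum_add, !sum_cmul. ring.
  intros. rewrite pd_mul; auto using Sm_D1. ring. Qed.
Lemma grad_const c y k : grad n (fun _ => c) y k = 0.
Proof. unfold grad. rewrite pd_const. rewrite (sum_eq _ (fun _ => 0)). rewrite sum_zero. ring.
  intros. rewrite pd_const. ring. Qed.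
Lemma grad_scal c f y k : Sm f -> (k <= n)%nat -> grad n (fun y => c * f y) y k = c * grad n f y k.
Proof. intros. rewrite grad_mul; auto using Sm_const. rewrite grad_const. ring. Qed.
Lemma grad_sum (F : nat -> Pt -> R) N y k : (forall m, (m <= N)%nat -> Sm (F m)) -> (k <= n)%nat ->
  grad n (fun y => sum_f_R0 (fun m => F m y) N) y k = sum_f_R0 (fun m => grad n (F m) y k) N.
Proof. intros H Hk. induction N; simpl. auto. rewrite grad_add; auto. rewrite IHN; auto.
  apply Sm_sum; auto. Qed.
Lemma grad_coord j y k : (j <= n)%nat -> grad n (fun y => y j) y k = (if Nat.eqb k j then 1 else 0) - y j * y k.
Proof. intros. unfold grad. rewrite pd_coord. f_equal.
  - destruct (Nat.eqb_spec j k), (Nat.eqb_spec k j); auto; lia.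
  - f_equal. rewrite (sum_eq _ (fun m => y m * (if Nat.eqb m j then 1 else 0))). apply sum_kron; auto.
    intros. rewrite pd_coord. rewrite Nat.eqb_sym. auto. Qed.

Lemma dot_sym a b : dot n a b = dot n b a.
Proof. unfold dot. apply sum_eq. intros; ring. Qed.
Lemma ip_sym f g y : ip f g y = ip g f y.
Proof. apply dot_sym. Qed.

Lemma div_add V W y : SmV V -> SmV W -> div n (fun z i => V z i + W z i) y = div n V y + div n W y.
Proof. intros HV HW. unfold div.
  rewrite (sum_eq (fun i => pd (fun z => V z i + W z i) i y) (fun i => pd (fun z => V z i) i y + pd (fun z => W z i) i y)).
  rewrite (sum_eq (fun i => sum_f_R0 (fun j => y i * y j * pd (fun z => V z i + W z i) j y) n)
     (fun i => sum_f_R0 (fun j => y i * y j * pd (fun z => V z i) j y) n + sum_f_R0 (fun j => y i * y j * pd (fun z => W z i) j y) n)).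
  rewrite !sum_add. ring.
  - intros. rewrite <- sum_add. apply sum_eq. intros. rewrite pd_add; auto using Sm_D1. ring.
  - intros. rewrite pd_add; auto using Sm_D1.
Qed.

Lemma div_mul f V y : Sm f -> SmV V ->
  div n (fun z i => f z * V z i) y = f y * div n V y + dot n (grad n f y) (V y).
Proof. intros Hf HV. unfold div, dot, grad.
  rewrite (sum_eq (fun i => pd (fun z => f z * V z i) i y) (fun i => pd f i y * V y i + f y * pd (fun z => V z i) i y)).
  rewrite (sum_eq (fun i => sum_f_R0 (fun j => y i * y j * pd (fun z => f z * V z i) j y) n)
     (fun i => (y i * V y i) * sum_f_R0 (fun j => y j * pd f j y) n + f y * sum_f_R0 (fun j => y i * y j * pd (fun z => V z i) j y) n)).
  rewrite (sum_eq (fun i => (pd f i y - sum_f_R0 (fun j => y j * pd f j y) n * y i) * V y i)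
     (fun i => pd f i y * V y i - (y i * V y i) * sum_f_R0 (fun j => y j * pd f j y) n)).
  rewrite !sum_add, !sum_sub, !sum_cmul.
  rewrite (sum_eq (fun i => y i * V y i * sum_f_R0 (fun j => y j * pd f j y) n)
     (fun i => sum_f_R0 (fun j => y j * pd f j y) n * (y i * V y i))) by (intros; ring).
  rewrite sum_cmul. ring.
  - intros; ring.
  - intros. rewrite <- sum_cmul, <- sum_cmul, <- sum_add. apply sum_eq. intros.
    rewrite pd_mul; auto using Sm_D1. ring.
  - intros. rewrite pd_mul; auto using Sm_D1.
Qed.

Lemma div_scal c V y : SmV V -> div n (fun z i => c * V z i) y = c * div n V y.
Proof. intros. rewrite (div_mul (fun _ => c)); auto using Sm_const.
  unfold dot. rewrite (sum_eq _ (fun _ => 0)). rewrite sum_zero. ring.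
  intros. rewrite grad_const. ring. Qed.

Lemma lap_add f g y : Sm f -> Sm g -> lap n (fun y => f y + g y) y = lap n f y + lap n g y.
Proof. intros. unfold lap. rewrite (div_ext _ (fun z i => grad n f z i + grad n g z i)).
  apply div_add; apply SmV_grad; auto. intros. apply grad_add; auto. Qed.
Lemma lap_scal c f y : Sm f -> lap n (fun y => c * f y) y = c * lap n f y.
Proof. intros. unfold lap. rewrite (div_ext _ (fun z i => c * grad n f z i)).
  apply div_scal; apply SmV_grad; auto. intros. apply grad_scal; auto. Qed.
Lemma lap_mul f g y : Sm f -> Sm g ->
  lap n (fun y => f y * g y) y = f y * lap n g y + g y * lap n f y + 2 * ip f g y.
Proof. intros. unfold lap. rewrite (div_ext _ (fun z i => f z * grad n g z i + g z * grad n f z i)).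
  rewrite div_add by (apply SmV_scal; auto; apply SmV_grad; auto).
  rewrite !div_mul; auto using SmV_grad. unfold ip. rewrite (dot_sym (grad n g y)). ring.
  intros. apply grad_mul; auto. Qed.
Lemma lap_sum (F : nat -> Pt -> R) N y : (forall m, (m <= N)%nat -> Sm (F m)) ->
  lap n (fun y => sum_f_R0 (fun m => F m y) N) y = sum_f_R0 (fun m => lap n (F m) y) N.
Proof. intros H. induction N; simpl. auto. rewrite lap_add; auto. rewrite IHN; auto.
  apply Sm_sum; auto. Qed.

Lemma dot_add_l a a' b : dot n (fun k => a k + a' k) b = dot n a b + dot n a' b.
Proof. unfold dot. rewrite <- sum_add. apply sum_eq; intros; ring. Qed.
Lemma dot_scal_l c a b : dot n (fun k => c * a k) b = c * dot n a b.
Proof. unfold dot. rewrite <- sum_cmul. apply sum_eq; intros; ring. Qed.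
Lemma dot_scal_r c a b : dot n a (fun k => c * b k) = c * dot n a b.
Proof. unfold dot. rewrite <- sum_cmul. apply sum_eq; intros; ring. Qed.

Lemma ip_add_l f f' g y : Sm f -> Sm f' -> ip (fun y => f y + f' y) g y = ip f g y + ip f' g y.
Proof. intros. unfold ip. rewrite <- dot_add_l. apply dot_ext; intros; auto. apply grad_add; auto. Qed.
Lemma ip_add_r f g g' y : Sm g -> Sm g' -> ip f (fun y => g y + g' y) y = ip f g y + ip f g' y.
Proof. intros. rewrite ip_sym, ip_add_l, (ip_sym g), (ip_sym g'); auto. Qed.
Lemma ip_mul_l f g h y : Sm f -> Sm g -> ip (fun y => f y * g y) h y = f y * ip g h y + g y * ip f h y.
Proof. intros. unfold ip.
  rewrite (dot_ext _ _ (fun k => f y * grad n g y k + g y * grad n f y k) (grad n h y)).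
  rewrite dot_add_l, !dot_scal_l. auto. intros; apply grad_mul; auto. auto. Qed.
Lemma ip_mul_r f g h y : Sm g -> Sm h -> ip f (fun y => g y * h y) y = g y * ip f h y + h y * ip f g y.
Proof. intros. rewrite ip_sym, ip_mul_l, (ip_sym h), (ip_sym g); auto. Qed.

Definition c0 := (INR n - 4) / 16.
Definition d0 := (INR n - 1) / 4 * ((INR n - 4) / 4) ^ 2.
Definition e0 := INR n * (INR n - 1) / 8 * ((INR n - 4) / 4) ^ 3.

Definition Tt (a b c : Pt -> R) (x : Pt) : R :=
  / 2 * div n (fun z i => ip a b z * grad n c z i) x
  - c0 * (a x * lap n (ip b c) x - div n (fun z i => lap n (fun y => b y * c y) z * grad n a z i) x)
  - d0 * (a x * lap n (fun y => b y * c y) x) + e0 * (a x * b x * c x).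

Lemma Lcub_T u x : Sm u -> Lcub n u x = Tt u u u x.
Proof. intros Hu. unfold Lcub, Tt. cbv zeta.
  rewrite (div_ext (fun z i => lap n (sq u) z * grad n u z i) (fun z i => lap n (fun y => u y * u y) z * grad n u z i)).
  rewrite (lap_ext (sq u) (fun y => u y * u y)). unfold gsq, ip, c0, d0, e0. ring.
  intros; unfold sq; ring.
  intros. rewrite (lap_ext (sq u) (fun y => u y * u y)). auto. intros; unfold sq; ring.
Qed.

Lemma Sm_fadd f g : Sm f -> Sm g -> Sm (fadd f g).
Proof. intros. unfold fadd. apply Sm_add; auto. Qed.

Lemma T_add1 a a' b c x : Sm a -> Sm a' -> Sm b -> Sm c ->
  Tt (fadd a a') b c x = Tt a b c x + Tt a' b c x.
Proof. intros. unfold Tt, fadd.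
  rewrite (div_ext (fun z i => ip (fun y => a y + a' y) b z * grad n c z i)
    (fun z i => ip a b z * grad n c z i + ip a' b z * grad n c z i)).
  rewrite (div_ext (fun z i => lap n (fun y => b y * c y) z * grad n (fun y => a y + a' y) z i)
    (fun z i => lap n (fun y => b y * c y) z * grad n a z i + lap n (fun y => b y * c y) z * grad n a' z i)).
  rewrite !div_add. ring.
  all: try (apply SmV_scal; [ apply Sm_lap; apply Sm_mul; auto | apply SmV_grad; auto ]).
  all: try (apply SmV_scal; [ apply Sm_ip; auto | apply SmV_grad; auto ]).
  - intros. rewrite grad_add; auto. ring.
  - intros. rewrite ip_add_l; auto. ring.
Qed.

Lemma T_add2 a b b' c x : Sm a -> Sm b -> Sm b' -> Sm c ->
  Tt a (fadd b b') c x = Tt a b c x + Tt a b' c x.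
Proof. intros. unfold Tt, fadd.
  rewrite (div_ext (fun z i => ip a (fun y => b y + b' y) z * grad n c z i)
    (fun z i => ip a b z * grad n c z i + ip a b' z * grad n c z i)).
  rewrite (div_ext (fun z i => lap n (fun y => (b y + b' y) * c y) z * grad n a z i)
    (fun z i => lap n (fun y => b y * c y) z * grad n a z i + lap n (fun y => b' y * c y) z * grad n a z i)).
  rewrite !div_add.
  rewrite (lap_ext (ip (fun y => b y + b' y) c) (fun y => ip b c y + ip b' c y)).
  rewrite (lap_ext (fun y => (b y + b' y) * c y) (fun y => b y * c y + b' y * c y)).
  rewrite !lap_add. ring.
  all: try (apply Sm_mul; auto); try (apply Sm_ip; auto).
  all: try (apply SmV_scal; [ apply Sm_lap; apply Sm_mul; auto | apply SmV_grad; auto ]).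
  all: try (apply SmV_scal; [ apply Sm_ip; auto | apply SmV_grad; auto ]).
  - intros; ring.
  - intros; apply ip_add_l; auto.
  - intros. rewrite (lap_ext (fun y => (b y + b' y) * c y) (fun y => b y * c y + b' y * c y)).
    rewrite lap_add. ring. apply Sm_mul; auto. apply Sm_mul; auto. intros; ring.
  - intros. rewrite ip_add_r; auto. ring.
Qed.

Lemma T_add3 a b c c' x : Sm a -> Sm b -> Sm c -> Sm c' ->
  Tt a b (fadd c c') x = Tt a b c x + Tt a b c' x.
Proof. intros. unfold Tt, fadd.
  rewrite (div_ext (fun z i => ip a b z * grad n (fun y => c y + c' y) z i)
    (fun z i => ip a b z * grad n c z i + ip a b z * grad n c' z i)).
  rewrite (div_ext (fun z i => lap n (fun y => b y * (c y + c' y)) z * grad n a z i)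
    (fun z i => lap n (fun y => b y * c y) z * grad n a z i + lap n (fun y => b y * c' y) z * grad n a z i)).
  rewrite !div_add.
  rewrite (lap_ext (ip b (fun y => c y + c' y)) (fun y => ip b c y + ip b c' y)).
  rewrite (lap_ext (fun y => b y * (c y + c' y)) (fun y => b y * c y + b y * c' y)).
  rewrite !lap_add. ring.
  all: try (apply Sm_mul; auto); try (apply Sm_ip; auto).
  all: try (apply SmV_scal; [ apply Sm_lap; apply Sm_mul; auto | apply SmV_grad; auto ]).
  all: try (apply SmV_scal; [ apply Sm_ip; auto | apply SmV_grad; auto ]).
  - intros; ring.
  - intros; apply ip_add_r; auto.
  - intros. rewrite (lap_ext (fun y => b y * (c y + c' y)) (fun y => b y * c y + b y * c' y)).
    rewrite lap_add. ring. apply Sm_mul; auto. apply Sm_mul; auto. intros; ring.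
  - intros. rewrite grad_add; auto. ring.
Qed.

Lemma L3_T a b c x : Sm a -> Sm b -> Sm c ->
  L3 n a b c x = / 6 * (Tt a b c x + Tt a c b x + Tt b a c x + Tt b c a x + Tt c a b x + Tt c b a x).
Proof. intros. unfold L3.
  assert (Sm (fadd a b)) by (apply Sm_fadd; auto).
  assert (Sm (fadd a c)) by (apply Sm_fadd; auto).
  assert (Sm (fadd b c)) by (apply Sm_fadd; auto).
  assert (Sm (fadd a (fadd b c))) by (apply Sm_fadd; auto).
  rewrite !Lcub_T by auto.
  repeat (first [rewrite T_add1 by auto | rewrite T_add2 by auto | rewrite T_add3 by auto]).
  field.
Qed.

#[local] Hint Resolve Sm_add Sm_mul Sm_ip Sm_lap Sm_const Sm_coord Sm_sub Sm_pow Sm_opp SmV_grad SmV_scal SmV_add Sm_fadd : sm.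

Lemma div_mul_grad f g x : Sm f -> Sm g ->
  div n (fun z i => f z * grad n g z i) x = f x * lap n g x + ip f g x.
Proof. intros. rewrite div_mul by auto 40 with sm. reflexivity. Qed.

Lemma div_split2 f g h k x : Sm f -> Sm g -> Sm h -> Sm k ->
  div n (fun z i => f z * grad n g z i + h z * grad n k z i) x =
  f x * lap n g x + ip f g x + (h x * lap n k x + ip h k x).
Proof. intros. rewrite div_add by auto 40 with sm. rewrite !div_mul_grad; auto. Qed.

Lemma ip_const_l c g y : ip (fun _ => c) g y = 0.
Proof. unfold ip. unfold dot. rewrite (sum_eq _ (fun _ => 0)), sum_zero. auto.
  intros. rewrite grad_const. ring. Qed.

Lemma ip_scal_l c f g y : Sm f -> ip (fun y => c * f y) g y = c * ip f g y.
Proof. intros. rewrite ip_mul_l by auto 40 with sm. unfold ip at 2.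
  rewrite (dot_ext _ _ (fun _ => 0) (grad n g y)). unfold dot. rewrite (sum_eq _ (fun _ => 0)), sum_zero. ring.
  intros; ring. intros; apply grad_const. auto. Qed.

Lemma comm u f x : Sm u -> Sm f ->
  Tt (fun y => f y * u y) u u x + Tt u (fun y => f y * u y) u x + Tt u u (fun y => f y * u y) x
  - 3 * f x * Tt u u u x =
  let P := ip u u x in let Q := u x * u x in let S := lap n (fun y => u y * u y) x in let Lu := lap n u x in
  (3*P + u x*Lu + 4*c0*S - 2*c0*u x*Lu) * ip f u x
 + (u x - 4*c0*u x) * ip (ip f u) u x
 + (c0*S*u x - 2*c0*P*u x + 2*c0*Q*Lu + 2*c0*(2*u x*P) - 2*d0*Q*u x + P*u x/2) * lap n f x
 + c0*u x * ip f (lap n (fun y => u y * u y)) x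
 + (u x/2 - 4*c0*u x) * ip f (ip u u) x
 - 2*c0*u x*u x * lap n (ip f u) x
 + 2*c0*Q * ip (lap n f) u x
 + (4*c0*Lu - 4*d0*u x) * ip f (fun y => u y * u y) x
 + 4*c0 * ip (ip f (fun y => u y * u y)) u x.
Proof. intros Hu Hf. unfold Tt.
  assert (E1 : forall z, ip (fun y => f y * u y) u z = f z * ip u u z + u z * ip f u z)
    by (intros; apply ip_mul_l; auto).
  assert (E2 : forall z, ip u (fun y => f y * u y) z = f z * ip u u z + u z * ip f u z)
    by (intros; rewrite ip_mul_r, (ip_sym u f); auto).
  assert (E3 : forall z, lap n (fun y => f y * u y * u y) z = f z * lap n (fun y => u y * u y) z + (u z * u z) * lap n f z
        + 2 * ip f (fun y => u y * u y) z).
  { intros. rewrite (lap_ext _ (fun y => f y * (u y * u y))) by (intros; ring). rewrite lap_mul by auto 40 with sm. ring. }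
  assert (E4 : forall z, lap n (fun y => u y * (f y * u y)) z = f z * lap n (fun y => u y * u y) z + (u z * u z) * lap n f z
        + 2 * ip f (fun y => u y * u y) z).
  { intros. rewrite <- E3. apply lap_ext. intros; ring. }
  rewrite (div_ext (fun z i => ip (fun y => f y * u y) u z * grad n u z i)
    (fun z i => (f z * ip u u z + u z * ip f u z) * grad n u z i)) by (intros; rewrite E1; auto).
  rewrite (div_ext (fun z i => ip u (fun y => f y * u y) z * grad n u z i)
    (fun z i => (f z * ip u u z + u z * ip f u z) * grad n u z i)) by (intros; rewrite E2; auto).
  rewrite (lap_ext (ip (fun y => f y * u y) u) (fun y => f y * ip u u y + u y * ip f u y)) by auto.
  rewrite (lap_ext (ip u (fun y => f y * u y)) (fun y => f y * ip u u y + u y * ip f u y)) by auto.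
  rewrite (div_ext (fun z i => lap n (fun y => u y * u y) z * grad n (fun y => f y * u y) z i)
    (fun z i => (lap n (fun y => u y * u y) z * f z) * grad n u z i + (lap n (fun y => u y * u y) z * u z) * grad n f z i))
    by (intros; rewrite grad_mul; auto; ring).
  rewrite (div_ext (fun z i => ip u u z * grad n (fun y => f y * u y) z i)
    (fun z i => (ip u u z * f z) * grad n u z i + (ip u u z * u z) * grad n f z i))
    by (intros; rewrite grad_mul; auto; ring).
  rewrite (div_ext (fun z i => lap n (fun y => f y * u y * u y) z * grad n u z i)
    (fun z i => (f z * lap n (fun y => u y * u y) z + (u z * u z) * lap n f z
        + 2 * ip f (fun y => u y * u y) z) * grad n u z i)) by (intros; rewrite E3; auto).
  rewrite (div_ext (fun z i => lap n (fun y => u y * (f y * u y)) z * grad n u z i)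
    (fun z i => (f z * lap n (fun y => u y * u y) z + (u z * u z) * lap n f z
        + 2 * ip f (fun y => u y * u y) z) * grad n u z i)) by (intros; rewrite E4; auto).
  rewrite E3, E4.
  rewrite !div_split2 by auto 40 with sm.
  rewrite !div_mul_grad by auto 40 with sm.
  rewrite !lap_add by auto 40 with sm.
  rewrite !lap_mul by auto 40 with sm.
  rewrite !ip_add_l by auto 40 with sm.
  rewrite !ip_mul_l by auto 40 with sm.
  rewrite ?ip_const_l.
  rewrite (ip_sym u f), (ip_sym (lap n (fun y => u y * u y)) f), (ip_sym (ip u u) f), (ip_sym u (ip f u)).
  cbv zeta. rewrite (lap_mul u u x) by auto. field.
Qed.

Definition Nf (y : Pt) : R := sum_f_R0 (fun k => y k * y k) n.

Lemma Sm_Nf : Sm Nf.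
Proof. unfold Nf. apply Sm_sum. intros. apply Sm_mul; apply Sm_coord. Qed.
#[local] Hint Resolve Sm_Nf : sm.

Lemma tangency g x : Nf x = 1 -> dot n x (grad n g x) = 0.
Proof. intros H. unfold dot, grad, Nf in *.
  set (s := sum_f_R0 (fun j => x j * pd g j x) n).
  rewrite (sum_eq _ (fun i => x i * pd g i x - s * (x i * x i))) by (intros; ring).
  rewrite sum_sub, sum_cmul, H. unfold s. ring. Qed.

Lemma ipX h y k : Sm h -> (k <= n)%nat ->
  ip (fun z => z k) h y = grad n h y k - y k * dot n y (grad n h y).
Proof. intros. unfold ip. unfold dot at 1.
  rewrite (sum_eq _ (fun j => grad n h y j * (if Nat.eqb j k then 1 else 0) - y k * (y j * grad n h y j))).
  rewrite sum_sub, sum_kron, sum_cmul; auto.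
  intros. rewrite grad_coord; auto. ring. Qed.

Lemma ipX_x h x k : Sm h -> (k <= n)%nat -> Nf x = 1 -> ip (fun z => z k) h x = grad n h x k.
Proof. intros. rewrite ipX, tangency; auto. ring. Qed.

Lemma Fa g x : Sm g -> Nf x = 1 -> sum_f_R0 (fun i => x i * ip (fun z => z i) g x) n = 0.
Proof. intros. rewrite (sum_eq _ (fun i => x i * grad n g x i)). apply tangency; auto.
  intros. rewrite ipX_x; auto. Qed.

Lemma ip_sum_l (F : nat -> Pt -> R) N h y : (forall m, (m <= N)%nat -> Sm (F m)) -> Sm h ->
  ip (fun y => sum_f_R0 (fun m => F m y) N) h y = sum_f_R0 (fun m => ip (F m) h y) N.
Proof. intros. induction N; simpl. auto. rewrite ip_add_l; auto. rewrite IHN; auto.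
  apply Sm_sum; auto. Qed.

Lemma ipN u x : Sm u -> Nf x = 1 -> ip Nf u x = 0.
Proof. intros. unfold Nf at 1. rewrite ip_sum_l; auto.
  rewrite (sum_eq _ (fun k => 2 * (x k * ip (fun z => z k) u x))). rewrite sum_cmul, Fa; auto. ring.
  intros. rewrite ip_mul_l; auto using Sm_coord. ring.
  intros; apply Sm_mul; apply Sm_coord. Qed.

Lemma div_Id y : div n (fun z k => z k) y = INR (S n) - Nf y.
Proof. unfold div, Nf.
  rewrite (sum_eq _ (fun _ => 1)). rewrite (sum_eq (fun i => sum_f_R0 _ n) (fun i => y i * y i)).
  rewrite sum_one. auto.
  intros. rewrite (sum_eq _ (fun j => (y i * y j) * (if Nat.eqb j i then 1 else 0))). rewrite sum_kron; auto.
  intros. rewrite pd_coord, Nat.eqb_sym. auto.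
  intros. rewrite pd_coord, Nat.eqb_refl. auto. Qed.

Lemma lapX i y : (i <= n)%nat -> lap n (fun z => z i) y = -(INR n + 2) * y i + 2 * y i * Nf y.
Proof. intros Hi. unfold lap.
  rewrite (div_ext _ (fun z k => (if Nat.eqb k i then 1 else 0) + (- z i) * z k)).
  rewrite div_add. rewrite div_mul.
  rewrite div_Id.
  assert (E : div n (fun _ k => if Nat.eqb k i then 1 else 0) y = 0).
  { unfold div. rewrite (sum_eq _ (fun _ => 0)), sum_zero. rewrite (sum_eq _ (fun _ => 0)), sum_zero. ring.
    intros. rewrite (sum_eq _ (fun _ => 0)), sum_zero. auto. intros. rewrite pd_const. ring.
    intros. apply pd_const. }
  rewrite E. unfold dot.
  rewrite (sum_eq _ (fun k => - (y k * (if Nat.eqb k i then 1 else 0)) + y i * (y k * y k))).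
  rewrite sum_add, sum_cmul. rewrite (sum_eq (fun k => - _) (fun k => (-1) * (y k * (if Nat.eqb k i then 1 else 0)))) by (intros; ring).
  rewrite sum_cmul, sum_kron; auto. rewrite S_INR. unfold Nf. ring.
  - intros. rewrite (grad_ext _ (fun z => (-1) * z i) y) by (intros; ring).
    rewrite grad_scal, grad_coord; auto using Sm_coord. ring.
  - apply Sm_opp, Sm_coord.
  - intros k Hk. apply Sm_coord.
  - intros k Hk. apply Sm_const.
  - intros k Hk. apply Sm_mul. apply Sm_opp, Sm_coord. apply Sm_coord.
  - intros. rewrite grad_coord; auto. ring.
Qed.

Lemma Fb x : Nf x = 1 -> sum_f_R0 (fun i => x i * lap n (fun z => z i) x) n = - INR n.
Proof. intros H. rewrite (sum_eq _ (fun i => (- INR n) * (x i * x i))).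
  rewrite sum_cmul. fold (Nf x). rewrite H. ring.
  intros. rewrite lapX, H; auto. ring. Qed.

Lemma Fe u x : Sm u -> Nf x = 1 -> sum_f_R0 (fun i => x i * ip (lap n (fun z => z i)) u x) n = 0.
Proof. intros Hu H. rewrite (sum_eq _ (fun i => (- INR n) * (x i * ip (fun z => z i) u x))).
  rewrite sum_cmul, Fa; auto. ring.
  intros i Hi. rewrite (ip_ext _ u (fun y => (-(INR n + 2)) * y i + 2 * (y i * Nf y)) u)
    by (intros; try rewrite lapX; auto; ring).
  rewrite ip_add_l, !ip_scal_l, ip_mul_l, ipN, H; auto with sm. ring.
  all: auto 40 with sm. Qed.

Lemma ipX_fun g i y : Sm g -> (i <= n)%nat ->
  ip (fun z => z i) g y = grad n g y i + (-1) * (y i * dot n y (grad n g y)).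
Proof. intros. rewrite ipX; auto. ring. Qed.

Lemma Sm_W g : Sm g -> Sm (fun y => dot n y (grad n g y)).
Proof. intros. unfold dot. apply Sm_sum. intros. apply Sm_mul. apply Sm_coord. apply Sm_grad; auto. Qed.
#[local] Hint Resolve Sm_W Sm_grad : sm.

Lemma ipW g u x : Sm g -> Sm u -> Nf x = 1 ->
  ip (fun y => dot n y (grad n g y)) u x =
  sum_f_R0 (fun k => x k * ip (fun y => grad n g y k) u x) n + ip g u x.
Proof. intros. unfold dot at 1. rewrite ip_sum_l; auto.
  replace (ip g u x) with (sum_f_R0 (fun k => grad n g x k * grad n u x k) n) by reflexivity.
  rewrite <- sum_add. apply sum_eq. intros.
  rewrite ip_mul_l, ipX_x; try ring; auto using Sm_coord, Sm_grad.
  intros. apply Sm_mul. apply Sm_coord. apply Sm_grad; auto. Qed.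

Lemma Fc g u x : Sm g -> Sm u -> Nf x = 1 ->
  sum_f_R0 (fun i => x i * ip (ip (fun z => z i) g) u x) n = - ip g u x.
Proof. intros Hg Hu H.
  rewrite (sum_eq _ (fun i => x i * ip (fun y => grad n g y i) u x + ((-1) * ip (fun y => dot n y (grad n g y)) u x) * (x i * x i))).
  rewrite sum_add. rewrite sum_cmul. fold (Nf x). rewrite H, ipW; auto. ring.
  intros i Hi. rewrite (ip_ext _ u (fun y => grad n g y i + (-1) * (y i * dot n y (grad n g y))) u)
    by (intros; try apply ipX_fun; auto).
  rewrite ip_add_l, ip_scal_l, ip_mul_l, tangency; auto 40 with sm. ring. Qed.

Lemma trace_grad u x : Sm u -> sum_f_R0 (fun k => grad n (fun y => grad n u y k) x k) n = lap n u x.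
Proof. intros. unfold lap, div. unfold grad at 1. rewrite sum_sub. f_equal. apply sum_eq. intros.
  rewrite Rmult_comm, <- sum_cmul. apply sum_eq. intros. ring. Qed.

Lemma Fd u x : Sm u -> Nf x = 1 ->
  sum_f_R0 (fun i => x i * lap n (ip (fun z => z i) u) x) n = -2 * lap n u x.
Proof. intros Hu H.
  assert (HW : dot n x (grad n u x) = 0) by (apply tangency; auto).
  rewrite (sum_eq _ (fun i => x i * lap n (fun y => grad n u y i) x + ((-1) * lap n (fun y => dot n y (grad n u y)) x) * (x i * x i)
      + (-2) * (x i * ip (fun z => z i) (fun y => dot n y (grad n u y)) x))).
  - rewrite !sum_add. rewrite !sum_cmul, Fa; auto with sm.
    fold (Nf x). rewrite H.
    rewrite (lap_ext (fun y => dot n y (grad n u y)) (fun y => sum_f_R0 (fun m => y m * grad n u y m) n)) by reflexivity.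
    rewrite lap_sum.
    rewrite (sum_eq (fun m => lap n (fun y => y m * grad n u y m) x)
       (fun m => x m * lap n (fun y => grad n u y m) x + (-(INR n) * (grad n u x m * x m)) + 2 * grad n (fun y => grad n u y m) x m)).
    rewrite !sum_add, !sum_cmul. rewrite (sum_eq (fun i => grad n u x i * x i) (fun i => x i * grad n u x i)) by (intros; ring).
    fold (dot n x (grad n u x)). rewrite HW.
    rewrite trace_grad; auto. ring.
    + intros. rewrite lap_mul, lapX, H, ipX_x; auto using Sm_coord, Sm_grad. ring.
    + intros. apply Sm_mul. apply Sm_coord. apply Sm_grad; auto.
  - intros i Hi. rewrite (lap_ext (ip (fun z => z i) u) (fun y => grad n u y i + (-1) * (y i * dot n y (grad n u y))))
      by (intros; apply ipX_fun; auto).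
    rewrite lap_add, lap_scal, lap_mul, HW; auto 40 with sm. ring.
Qed.

End S.

Theorem theorem1p4 (n : nat) (Hn : (3 <= n)%nat) (U : Pt -> R) (HU : smooth n U)
  (x : Pt) (Hx0 : forall k, (n < k)%nat -> x k = 0)
  (Hx : sum_f_R0 (fun i => x i ^ 2) n = 1) :
  sum_f_R0 (fun i => x i * (L3 n (fun y => y i * U y) U U x - x i * L3 n U U U x)) n
  = (INR n - 1) / 3 * U x * sigma1 n U x.
Proof.
  assert (Hu : Sm n U) by (apply smooth_Sm; auto).
  assert (HN : Nf n x = 1) by (rewrite <- Hx; unfold Nf; apply sum_eq; intros; ring).
  set (SS := lap n (fun y => U y * U y)).
  set (QQ := fun y => U y * U y).
  set (P := ip n U U x). set (Lu := lap n U x). set (u := U x).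
  set (A1 := (3*P + u*Lu + 4*c0 n*SS x - 2*c0 n*u*Lu)).
  set (A2 := (u - 4*c0 n*u)).
  set (A3 := (c0 n*SS x*u - 2*c0 n*P*u + 2*c0 n*(u*u)*Lu + 2*c0 n*(2*u*P) - 2*d0 n*(u*u)*u + P*u/2)).
  set (A4 := c0 n * u).
  set (A5 := (u/2 - 4*c0 n*u)).
  set (A6 := - (2*c0 n*u*u)).
  set (A7 := 2*c0 n*(u*u)).
  set (A8 := (4*c0 n*Lu - 4*d0 n*u)).
  set (A9 := 4*c0 n).
  rewrite (sum_eq _ (fun i => / 3 * (
       A1 * (x i * ip n (fun z => z i) U x) + (A2 * (x i * ip n (ip n (fun z => z i) U) U x)
     + (A3 * (x i * lap n (fun z => z i) x) + (A4 * (x i * ip n (fun z => z i) SS x)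
     + (A5 * (x i * ip n (fun z => z i) (ip n U U) x) + (A6 * (x i * lap n (ip n (fun z => z i) U) x)
     + (A7 * (x i * ip n (lap n (fun z => z i)) U x) + (A8 * (x i * ip n (fun z => z i) QQ x)
     + A9 * (x i * ip n (ip n (fun z => z i) QQ) U x))))))))))).
  - rewrite sum_cmul. rewrite !sum_add. rewrite !sum_cmul.
    rewrite (Fa n U x), (Fa n SS x), (Fa n (ip n U U) x), (Fa n QQ x), (Fb n x), (Fc n U U x), (Fc n QQ U x),
      (Fd n U x), (Fe n U x); auto.
    all: try solve [unfold SS, QQ; try apply Sm_lap; try apply Sm_ip; auto; apply Sm_mul; auto].
    unfold sigma1. cbv zeta.
    rewrite (lap_ext n (sq U) (fun y => U y * U y)) by (intros; unfold sq; ring).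
    change (gsq n U x) with P.
    unfold A1, A2, A3, A4, A5, A6, A7, A8, A9, P, Lu, u. unfold QQ, SS.
    rewrite (ip_mul_l n U U U x) by auto.
    rewrite (lap_mul n U U x) by auto.
    unfold c0, d0. field.
  - intros i Hi.
    assert (Hf : Sm n (fun y => y i)) by apply Sm_coord.
    assert (Hv : Sm n (fun y => y i * U y)) by (apply Sm_mul; auto).
    rewrite (L3_T n (fun y => y i * U y) U U x), (L3_T n U U U x) by auto.
    pose proof (comm n U (fun y => y i) x Hu Hf) as E. cbv beta zeta in E.
    match type of E with ?L = ?R =>
      transitivity (/3 * x i * L); [field | rewrite E] end.
    unfold A1, A2, A3, A4, A5, A6, A7, A8, A9, P, Lu, u, SS, QQ. field.
Qed.
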